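(* Let $p$ be a prime. For the tripartite system $\mathbb{C}^p\otimes\mathbb{C}^p\otimes\mathbb{C}^p$ there exists a complete set of $p^3+1$ mutually unbiased bases consisting of $p+1$ bases all of whose elements are fully separable (product states) and $p^3-p$ bases all of whose elements are entangled with respect to every bipartition (genuinely tripartite entangled).
   Context: Two orthonormal bases of $\mathbb{C}^d$ are mutually unbiased if every element of one has squared overlap $1/d$ with every element of the other; a complete set consists of $d+1$ pairwise mutually unbiased bases. A pure state is fully separable if it is a tensor product of three single-qupit states, and genuinely tripartite entangled if it is not a product state across any of the bipartitions $(1|23)$, $(2|13)$, $(3|12)$. *)

(* Defs.v *)
From HB Require Import structures.
From mathcomp Require Import all_boot all_order all_algebra.
From mathcomp Require Import complex.
From mathcomp Require Import Rstruct.
Set Implicit Arguments. Unset Strict Implicit. Unset Printing Implicit Defensive.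
Import Order.TTheory GRing.Theory Num.Theory.
Local Open Scope ring_scope.

From Stdlib Require Rdefinitions.
Definition Cplx : numClosedFieldType := (Rdefinitions.R)[i].

Definition idx3 (p : nat) : finType := ('I_p * 'I_p * 'I_p)%type.

Definition vec3 (p : nat) := idx3 p -> Cplx.

Definition hdot (p : nat) (u v : vec3 p) : Cplx :=
  \sum_(x : idx3 p) (u x)^* * v x.

(* A family of vectors indexed by a set of size p^3 = dim (C^p)^{(x)3};
   it is an orthonormal basis iff it is orthonormal. *)
Definition family3 (p : nat) := idx3 p -> vec3 p.

Definition orthonormal_basis (p : nat) (B : family3 p) : Prop :=
  forall a b : idx3 p, hdot (B a) (B b) = (a == b)%:R.

Definition mutually_unbiased (p : nat) (B B' : family3 p) : Prop :=
  forall a b : idx3 p, `|hdot (B a) (B' b)| ^+ 2 = ((p ^ 3)%N)%:R^-1.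

Definition fully_separable (p : nat) (psi : vec3 p) : Prop :=
  exists u v w : 'I_p -> Cplx,
    forall i j k, psi (i, j, k) = u i * v j * w k.

Definition product_1_23 (p : nat) (psi : vec3 p) : Prop :=
  exists (u : 'I_p -> Cplx) (phi : 'I_p -> 'I_p -> Cplx),
    forall i j k, psi (i, j, k) = u i * phi j k.

Definition product_2_13 (p : nat) (psi : vec3 p) : Prop :=
  exists (v : 'I_p -> Cplx) (phi : 'I_p -> 'I_p -> Cplx),
    forall i j k, psi (i, j, k) = v j * phi i k.

Definition product_3_12 (p : nat) (psi : vec3 p) : Prop :=
  exists (w : 'I_p -> Cplx) (phi : 'I_p -> 'I_p -> Cplx),
    forall i j k, psi (i, j, k) = w k * phi i j.

Definition genuinely_tripartite_entangled (p : nat) (psi : vec3 p) : Prop :=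
  ~ product_1_23 psi /\ ~ product_2_13 psi /\ ~ product_3_12 psi.

(* Main.v *)
Require Import Defs.
From HB Require Import structures.
From mathcomp Require Import all_boot all_order all_algebra.
From mathcomp Require Import all_solvable all_field.
From mathcomp Require Import complex Rstruct.
From mathcomp Require Import ring zify.
Set Implicit Arguments. Unset Strict Implicit. Unset Printing Implicit Defensive.
Import Order.TTheory GRing.Theory Num.Theory.
Local Open Scope ring_scope.

Lemma Cplx_prim_root_exists n : (n > 0)%N -> exists z : Cplx, n.-primitive_root z.
Proof.
pose p : {poly Cplx} := 'X^n - 1; have [r Dp] := closed_field_poly_normal p.
move=> n_gt0; rewrite (monicP _) ?monicXnsubC // scale1r in Dp.
have rn1: all n.-unity_root r by apply/allP=> z; rewrite -root_prod_XsubC -Dp.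
have sz_r: (n < (size r).+1)%N.
  by rewrite -(size_prod_XsubC r id) -Dp size_XnsubC.
have [|z] := hasP (has_prim_root n_gt0 rn1 _ sz_r); last by exists z.
by rewrite -separable_prod_XsubC -Dp separable_Xn_sub_1 // pnatr_eq0 -lt0n.
Qed.

Lemma prim_conj n (z : Cplx) : n.-primitive_root z -> z^* * z = 1.
Proof.
move=> pz; have n0 := prim_order_gt0 pz.
have : `|z| ^+ n == 1 by rewrite -normrX prim_expr_order // normr1.
rewrite pexpr_eq1 // => /eqP nz.
by rewrite -normCKC nz expr1n.
Qed.

Lemma sum_idx3 p (H : idx3 p -> Cplx) :
  \sum_(x : idx3 p) H x = \sum_(i < p) \sum_(j < p) \sum_(k < p) H (i, j, k).
Proof.
rewrite [RHS]pair_bigA /=.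
have -> : \sum_(x : idx3 p) H x = \sum_(ij : 'I_p * 'I_p) \sum_(k < p) H (ij, k).
  by rewrite [RHS]pair_bigA; apply: eq_bigr => -[].
by apply: eq_bigr => -[].
Qed.

Lemma prod1_rank p (psi : vec3 p) : product_1_23 psi ->
  forall i i' j k j' k', psi (i,j,k) * psi (i',j',k') = psi (i,j',k') * psi (i',j,k).
Proof. by case=> u [phi H] i i' j k j' k'; rewrite !H; ring. Qed.
Lemma prod2_rank p (psi : vec3 p) : product_2_13 psi ->
  forall i i' j k j' k', psi (i,j,k) * psi (i',j',k') = psi (i',j,k') * psi (i,j',k).
Proof. by case=> u [phi H] i i' j k j' k'; rewrite !H; ring. Qed.
Lemma prod3_rank p (psi : vec3 p) : product_3_12 psi ->
  forall i i' j k j' k', psi (i,j,k) * psi (i',j',k') = psi (i',j',k) * psi (i,j,k').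
Proof. by case=> u [phi H] i i' j k j' k'; rewrite !H; ring. Qed.

Definition cst (n : nat) : Cplx := (sqrtC n%:R)^-1.
Lemma cst_ge0 n : 0 <= cst n.
Proof. by rewrite /cst invr_ge0 sqrtC_ge0 ler0n. Qed.
Lemma cst_conj n : (cst n)^* = cst n.
Proof. by apply: conj_Creal; apply: ger0_real; apply: cst_ge0. Qed.
Lemma cst_sq n : cst n * cst n = n%:R^-1.
Proof. by rewrite -expr2 /cst exprVn sqrtCK. Qed.
Lemma cst_norm n : `|cst n| = cst n.
Proof. by rewrite ger0_norm // cst_ge0. Qed.

Definition comp_basis p : family3 p := fun a x => (a == x)%:R.

Lemma hdot_compl p a (v : vec3 p) : hdot (comp_basis a) v = v a.
Proof.
rewrite /hdot (bigD1 a) // big1 /= ?addr0 /comp_basis.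
  by rewrite eqxx conjC1 mul1r.
by move=> x /= xa; rewrite /comp_basis eq_sym (negPf xa); rewrite conjC0 mul0r.
Qed.

Lemma hdot_compr p a (v : vec3 p) : hdot v (comp_basis a) = (v a)^*.
Proof.
rewrite /hdot (bigD1 a) // big1 /= ?addr0 /comp_basis.
  by rewrite eqxx mulr1.
by move=> x /= xa; rewrite /comp_basis eq_sym (negPf xa); rewrite mulr0.
Qed.

Lemma comp_sep p (a : idx3 p) : fully_separable (comp_basis a).
Proof.
exists (fun i => (a.1.1 == i)%:R), (fun j => (a.1.2 == j)%:R), (fun k => (a.2 == k)%:R).
move=> i j k; case: a => [[a1 a2] a3] /=; rewrite /comp_basis /=.
by rewrite !xpair_eqE -!natrM !mulnb.
Qed.

Lemma assemble p (Q : 'I_(p^3) -> family3 p) (S' : {set 'I_(p^3)}) :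
  (forall m, orthonormal_basis (Q m)) ->
  (forall m m', m != m' -> mutually_unbiased (Q m) (Q m')) ->
  (forall m a x, `|Q m a x| ^+ 2 = ((p^3)%N)%:R^-1) ->
  #|S'| = p ->
  (forall m, m \in S' -> forall a, fully_separable (Q m a)) ->
  (forall m, m \notin S' -> forall a, genuinely_tripartite_entangled (Q m a)) ->
  exists M : 'I_(p ^ 3).+1 -> family3 p,
    (forall n, orthonormal_basis (M n)) /\
    (forall n m, n != m -> mutually_unbiased (M n) (M m)) /\
    exists S : {set 'I_(p ^ 3).+1},
      #|S| = p.+1 /\
      (forall n, n \in S -> forall a, fully_separable (M n a)) /\
      (forall n, n \notin S -> forall a, genuinely_tripartite_entangled (M n a)).
Proof.
move=> Qon Qmu Qnorm cS Qsep Qent.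
pose M (n : 'I_(p^3).+1) := if unlift ord0 n is Some m then Q m else @comp_basis p.
have Mc : M ord0 = @comp_basis p by rewrite /M unlift_none.
have Ml m : M (lift ord0 m) = Q m by rewrite /M liftK.
exists M; split; [|split].
- move=> n; case: (unliftP ord0 n) => [m|] ->; rewrite ?Ml ?Mc //.
  by move=> a b; rewrite hdot_compl /comp_basis eq_sym.
- have cq m : mutually_unbiased (@comp_basis p) (Q m).
    by move=> a' b'; rewrite hdot_compl Qnorm.
  have qc m : mutually_unbiased (Q m) (@comp_basis p).
    by move=> a' b'; rewrite hdot_compr norm_conjC Qnorm.
  move=> n n'; case: (unliftP ord0 n) => [m|] ->; case: (unliftP ord0 n') => [m'|] ->; rewrite ?Ml ?Mc.
  + by move=> ne; apply: Qmu; apply: contraNneq ne => ->.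
  + by move=> _; apply: qc.
  + by move=> _; apply: cq.
  + by rewrite eqxx.
- exists (ord0 |: [set lift ord0 m | m in S']); split; [|split].
  + rewrite cardsU1 card_imset; last exact: lift_inj.
    rewrite cS; case: imsetP => // -[m _ /esym/eqP]; by rewrite lift_eqF.
  + move=> n; rewrite !inE; case/orP=> [/eqP ->|/imsetP[m mS ->]].
      by rewrite Mc => a; apply: comp_sep.
    by rewrite Ml; apply: Qsep.
  + move=> n; rewrite !inE negb_or => /andP[n0]; case: (unliftP ord0 n) n0 => [m|] -> //.
    rewrite Ml => _ nS a; apply: Qent; apply: contraNN nS => mS.
  by apply/imsetP; exists m.
Qed.

Lemma i4 : ('i : Cplx) ^+ 4 = 1.
Proof. by rewrite (exprM _ 2 2) sqrCi sqrrN expr1n. Qed.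

Lemma prim_i : 4.-primitive_root ('i : Cplx).
Proof.
have [m pm] := prim_order_exists (isT : (0 < 4)%N) i4.
have i2 : ('i : Cplx) ^+ 2 != 1.
  rewrite sqrCi -subr_eq0 -opprD oppr_eq0 -(natrD _ 1 1) pnatr_eq0 //.
case: m pm => [|[|[|[|[|m]]]]] pm //.
- by move=> _; case/eqP: i2; have := prim_expr_order pm; rewrite expr1 => ->; rewrite expr1n.
- by move=> _; case/eqP: i2; rewrite -(prim_expr_order pm).
Qed.

Definition cnt (j : nat) (s : seq nat) := count (fun k => k %% 4 == j)%N s.

Lemma iexp_mod k : ('i : Cplx) ^+ (k %% 4) = 'i ^+ k.
Proof. by rewrite expr_mod // i4. Qed.

Lemma sumI s : \sum_(k <- s) ('i : Cplx) ^+ k =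
  ((cnt 0 s)%:R - (cnt 2 s)%:R) + 'i * ((cnt 1 s)%:R - (cnt 3 s)%:R).
Proof.
elim: s => [|k s IH]; first by rewrite big_nil /cnt /= subrr mulr0 addr0.
rewrite big_cons IH /cnt /= -iexp_mod.
have : (k %% 4 < 4)%N by rewrite ltn_mod.
case: (k %% 4)%N => [|[|[|[|]]]] // _ /=; rewrite ?natrD.
- by rewrite expr0; ring.
- by rewrite expr1; ring.
- by rewrite sqrCi; ring.
- by rewrite exprS sqrCi; ring.
Qed.

Definition ed (m : nat) : (nat * nat * nat) * (nat * nat * nat) :=
  match m with
  | 0 => ((0,0,0),(0,0,0))
  | 1 => ((1,1,1),(0,0,0))
  | 2 => ((0,0,1),(1,0,1))
  | 3 => ((0,1,0),(1,1,0))
  | 4 => ((0,1,1),(0,1,1))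
  | 5 => ((1,0,0),(0,1,1))
  | 6 => ((1,0,1),(1,1,0))
  | _ => ((1,1,0),(1,0,1))
  end%N.

Definition ex2 (m a0 a1 a2 x0 x1 x2 : nat) : nat :=
  let: ((d0,d1,d2),(o0,o1,o2)) := ed m in
  (d0*x0 + d1*x1 + d2*x2 + 2*(o0*x0*x1 + o1*x0*x2 + o2*x1*x2)
   + 2*(a0*x0 + a1*x1 + a2*x2))%N.

Definition L8 (G : nat -> nat -> nat -> nat) : seq nat :=
  [:: G 0 0 0; G 0 0 1; G 0 1 0; G 0 1 1; G 1 0 0; G 1 0 1; G 1 1 0; G 1 1 1]%N.

Lemma sum8 (F : nat -> Cplx) (G : nat -> nat -> nat -> nat) :
  \sum_(x : idx3 2) F (G x.1.1 x.1.2 x.2) = \sum_(k <- L8 G) F k.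
Proof.
rewrite sum_idx3 !big_ord_recl !big_ord0 /= !big_cons big_nil /=.
by rewrite !addr0 !addrA.
Qed.

Definition all2n (P : nat -> bool) := all P (iota 0 2).
Definition all3 (P : nat -> nat -> nat -> bool) :=
  all2n (fun i => all2n (fun j => all2n (fun k => P i j k))).

Lemma all3P P : all3 P -> forall x : idx3 2, P x.1.1 x.1.2 x.2.
Proof.
move=> H [[i j] k] /=.
have mi (y : 'I_2) : (val y \in iota 0 2) by rewrite mem_iota /= ltn_ord.
by move/allP: H => /(_ _ (mi i)) /allP /(_ _ (mi j)) /allP /(_ _ (mi k)).
Qed.

Definition Gof m a0 a1 a2 m' b0 b1 b2 :=
  fun i j k => (3 * ex2 m a0 a1 a2 i j k + ex2 m' b0 b1 b2 i j k)%N.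

Definition ck_on := all (fun m => all3 (fun a0 a1 a2 => all3 (fun b0 b1 b2 =>
  let s := L8 (Gof m a0 a1 a2 m b0 b1 b2) in
  if ((a0, a1, a2) == (b0, b1, b2)) then
    [&& cnt 0 s == 8, cnt 1 s == 0, cnt 2 s == 0 & cnt 3 s == 0]%N
  else (cnt 0 s == cnt 2 s) && (cnt 1 s == cnt 3 s)))) (iota 0 8).

Definition sqd (a b : nat) := ((a - b) * (a - b) + (b - a) * (b - a))%N.

Definition ck_mu := all (fun m => all (fun m' => (m != m') ==>
  all3 (fun a0 a1 a2 => all3 (fun b0 b1 b2 =>
  let s := L8 (Gof m a0 a1 a2 m' b0 b1 b2) in
  sqd (cnt 0 s) (cnt 2 s) + sqd (cnt 1 s) (cnt 3 s) == 8)%N)) (iota 0 8)) (iota 0 8).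

Lemma ck_on_ok : ck_on. Proof. by vm_compute. Qed.
Lemma ck_mu_ok : ck_mu. Proof. by vm_compute. Qed.

Lemma iexp_cancel (c : Cplx) a b a' b' : c != 0 ->
  c * 'i ^+ a * (c * 'i ^+ b) = c * 'i ^+ a' * (c * 'i ^+ b') ->
  ((a + b) %% 4 = (a' + b') %% 4)%N.
Proof.
move=> c0 E; apply/eqP; rewrite -(eq_prim_root_expr prim_i) !exprD.
have cc : c * c != 0 by rewrite mulf_neq0.
apply/eqP; apply: (mulfI cc).
by rewrite mulrACA E mulrACA.
Qed.

Definition pt (b c y0 y1 : nat) : nat * nat * nat :=
  match b with 1 => (c,y0,y1) | 2 => (y0,c,y1) | _ => (y0,y1,c) end%N.
Definition E3 (E : nat -> nat -> nat -> nat) (t : nat * nat * nat) := E t.1.1 t.1.2 t.2.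
Definition entb (E : nat -> nat -> nat -> nat) b :=
  has (fun y0 => has (fun y1 => has (fun z0 => has (fun z1 =>
   ((E3 E (pt b 0 y0 y1) + E3 E (pt b 1 z0 z1)) %% 4 !=
    (E3 E (pt b 0 z0 z1) + E3 E (pt b 1 y0 y1)) %% 4)%N)
   (iota 0 2)) (iota 0 2)) (iota 0 2)) (iota 0 2).

Lemma ent_of_check (psi : vec3 2) (c : Cplx) (E : nat -> nat -> nat -> nat) :
  c != 0 -> (forall i j k : 'I_2, psi (i, j, k) = c * 'i ^+ E i j k) ->
  [&& entb E 1, entb E 2 & entb E 3] -> genuinely_tripartite_entangled psi.
Proof.
move=> c0 hpsi /and3P[e1 e2 e3].
have io y : (y \in iota 0 2) -> nat_of_ord (inord y : 'I_2) = y.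
  by rewrite mem_iota => /andP[_ ?]; apply: inordK.
split; [|split].
- move/prod1_rank => H.
  case/hasP: e1 => y0 /io h0 /hasP[y1 /io h1 /hasP[z0 /io g0 /hasP[z1 /io g1 /negP]]].
  apply; apply/eqP.
  have := H (inord 0) (inord 1) (inord y0) (inord y1) (inord z0) (inord z1).
  rewrite !hpsi h0 h1 g0 g1 !inordK //; exact: iexp_cancel.
- move/prod2_rank => H.
  case/hasP: e2 => y0 /io h0 /hasP[y1 /io h1 /hasP[z0 /io g0 /hasP[z1 /io g1 /negP]]].
  apply; apply/eqP.
  have := H (inord y0) (inord z0) (inord 0) (inord y1) (inord 1) (inord z1).
  rewrite !hpsi h0 h1 g0 g1 !inordK //; exact: iexp_cancel.
- move/prod3_rank => H.
  case/hasP: e3 => y0 /io h0 /hasP[y1 /io h1 /hasP[z0 /io g0 /hasP[z1 /io g1 /negP]]].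
  apply; apply/eqP.
  have := H (inord y0) (inord z0) (inord y1) (inord 0) (inord z1) (inord 1).
  rewrite !hpsi h0 h1 g0 g1 !inordK //; exact: iexp_cancel.
Qed.

Definition ck_ent := all (fun m => all3 (fun a0 a1 a2 =>
  [&& entb (ex2 m a0 a1 a2) 1, entb (ex2 m a0 a1 a2) 2 & entb (ex2 m a0 a1 a2) 3]))
  (iota 2 6).
Lemma ck_ent_ok : ck_ent. Proof. by vm_compute. Qed.

Definition Q2 (m : 'I_(2 ^ 3)) : family3 2 := fun a x =>
  cst 8 * 'i ^+ ex2 m a.1.1 a.1.2 a.2 x.1.1 x.1.2 x.2.

Lemma conj_iexp e : (('i : Cplx) ^+ e)^* = ('i ^+ 3) ^+ e.
Proof. by rewrite rmorphXn /= conjCi exprS sqrCi mulrN1. Qed.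

Lemma hdot_Q2 m m' (a b : idx3 2) :
  hdot (Q2 m a) (Q2 m' b) = cst 8 * cst 8 *
   \sum_(k <- L8 (Gof m a.1.1 a.1.2 a.2 m' b.1.1 b.1.2 b.2)) 'i ^+ k.
Proof.
rewrite /hdot -sum8 mulr_sumr; apply: eq_bigr => x _.
rewrite /Q2 /Gof rmorphM /= cst_conj conj_iexp -exprM exprD; ring.
Qed.

Lemma idx_eqE (a b : idx3 2) :
  (a == b) = ((val a.1.1, val a.1.2, val a.2) == (val b.1.1, val b.1.2, val b.2)).
Proof. by case: a b => [[a1 a2] a3] [[b1 b2] b3]; rewrite !xpair_eqE. Qed.

Lemma ordP8 (m : 'I_(2 ^ 3)) : val m \in iota 0 8.
Proof. by rewrite mem_iota /= ltn_ord. Qed.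

Lemma cst8_ne0 : cst 8 != 0.
Proof. by rewrite /cst invr_eq0 sqrtC_eq0 pnatr_eq0. Qed.

Lemma Q2_on m : orthonormal_basis (Q2 m).
Proof.
move=> a b; rewrite hdot_Q2 sumI idx_eqE.
move/allP: ck_on_ok => /(_ _ (ordP8 m)) /all3P /(_ a) /all3P /(_ b) /=.
case: ifP => _.
  case/and4P => /eqP-> /eqP-> /eqP-> /eqP->.
  by rewrite cst_sq subr0 subrr mulr0 addr0 mulVf // pnatr_eq0.
by case/andP => /eqP-> /eqP->; rewrite !subrr mulr0 addr0 mulr0.
Qed.

Lemma sqd_nat (a b : nat) : ((a%:R - b%:R : Cplx) ^+ 2) = (sqd a b)%:R.
Proof.
rewrite /sqd; case: (leqP a b) => h.
  have -> : (a - b = 0)%N by apply/eqP; rewrite subn_eq0.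
  by rewrite mul0n add0n natrM natrB // -opprB sqrrN expr2.
have -> : (b - a = 0)%N by apply/eqP; rewrite subn_eq0 ltnW.
by rewrite mul0n addn0 natrM natrB ?(ltnW h) // expr2.
Qed.

Lemma norm_rect (x y : nat) (z w : nat) :
  `|((x%:R - z%:R) + 'i * (y%:R - w%:R) : Cplx)| ^+ 2 = (sqd x z + sqd y w)%:R.
Proof.
have r1 : (x%:R - z%:R : Cplx) \is Num.real by rewrite rpredB ?realn.
have r2 : (y%:R - w%:R : Cplx) \is Num.real by rewrite rpredB ?realn.
by rewrite normC2_Re_Im (Re_rect r1 r2) (Im_rect r1 r2) natrD !sqd_nat.
Qed.

Lemma Q2_mu m m' : m != m' -> mutually_unbiased (Q2 m) (Q2 m').
Proof.
move=> ne a b; rewrite hdot_Q2 sumI normrM exprMn norm_rect.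
move/allP: ck_mu_ok => /(_ _ (ordP8 m)) /allP /(_ _ (ordP8 m')).
rewrite (inj_eq val_inj) ne implyTb => /all3P /(_ a) /all3P /(_ b) /eqP ->.
rewrite normrM !cst_norm exprMn !expr2 cst_sq; by field.
Qed.

Lemma Q2_norm m a x : `|Q2 m a x| ^+ 2 = ((2 ^ 3)%N)%:R^-1.
Proof. by rewrite /Q2 normrM normrX normCi expr1n mulr1 cst_norm expr2 cst_sq. Qed.

Lemma ex2_sep (m : nat) a0 a1 a2 i j k : (m < 2)%N ->
  ex2 m a0 a1 a2 i j k = (ex2 m a0 a1 a2 i 0 0 + ex2 m a0 a1 a2 0 j 0 + ex2 m a0 a1 a2 0 0 k)%N.
Proof. by case: m => [|[|]] // _; rewrite /ex2 /=; ring. Qed.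

Lemma Q2_sep (m : 'I_(2 ^ 3)) a : (m < 2)%N -> fully_separable (Q2 m a).
Proof.
move=> m2.
exists (fun i : 'I_2 => cst 8 * 'i ^+ ex2 m a.1.1 a.1.2 a.2 i 0 0),
       (fun j : 'I_2 => 'i ^+ ex2 m a.1.1 a.1.2 a.2 0 j 0),
       (fun k : 'I_2 => 'i ^+ ex2 m a.1.1 a.1.2 a.2 0 0 k).
by move=> i j k; rewrite /Q2 /= (ex2_sep _ _ _ _ _ _ m2) !exprD !mulrA.
Qed.

Lemma Q2_ent (m : 'I_(2 ^ 3)) a : ~~ (m < 2)%N -> genuinely_tripartite_entangled (Q2 m a).
Proof.
move=> m2; apply: (@ent_of_check _ (cst 8) (ex2 m a.1.1 a.1.2 a.2) cst8_ne0) => //.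
have : val m \in iota 2 6 by rewrite mem_iota leqNgt m2 /=; exact: ltn_ord m.
move/allP: ck_ent_ok => H /H /all3P; exact.
Qed.

Lemma le28 : (2 <= 2 ^ 3)%N. Proof. by []. Qed.

Lemma main2 :
  exists M : 'I_(2 ^ 3).+1 -> family3 2,
    (forall n, orthonormal_basis (M n)) /\
    (forall n m, n != m -> mutually_unbiased (M n) (M m)) /\
    exists S : {set 'I_(2 ^ 3).+1},
      #|S| = 3 /\
      (forall n, n \in S -> forall a, fully_separable (M n a)) /\
      (forall n, n \notin S -> forall a, genuinely_tripartite_entangled (M n a)).
Proof.
pose S' := [set widen_ord le28 i | i : 'I_2].
have memS m : (m \in S') = (m < 2)%N.
  apply/imsetP/idP => [[i _ ->]|m2]; first by rewrite /= ltn_ord.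
  by exists (Ordinal m2) => //; apply: val_inj.
apply: (@assemble 2 Q2 S').
- exact: Q2_on.
- exact: Q2_mu.
- exact: Q2_norm.
- rewrite card_imset ?cardT ?size_enum_ord //; by move=> x y /(congr1 val) /= /val_inj.
- by move=> m; rewrite memS => m2 a; apply: Q2_sep.
- by move=> m; rewrite memS => m2 a; apply: Q2_ent.
Qed.

Section CubicField.
Variable K : finFieldType.
Variables c0 c1 c2 : K.
Hypothesis noroot : forall r : K, r ^+ 3 + c2 * r ^+ 2 + c1 * r + c0 != 0.

Definition cf (a b c : K) : {poly K} := a%:P + b%:P * 'X + c%:P * 'X^2.
Definition fpol : {poly K} := 'X^3 + cf c0 c1 c2.

Lemma coef_cf a b c j :
  (cf a b c)`_j = (if j == 0%N then a else 0) + (if j == 1%N then b else 0)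
                  + (if j == 2%N then c else 0).
Proof.
rewrite /cf !coefD coefC !coefCM coefX coefXn.
by case: j => [|[|[|j]]] /=; rewrite ?mulr0 ?mulr1 ?addr0 ?add0r.
Qed.

Lemma size_cf a b c : (size (cf a b c) <= 3)%N.
Proof.
by apply/leq_sizeP => j j3; rewrite coef_cf; case: j j3 => [|[|[|j]]] //= _; rewrite !addr0.
Qed.

Lemma size_fpol : size fpol = 4%N.
Proof.
rewrite /fpol size_polyDl ?size_polyXn //.
exact: (leq_ltn_trans (size_cf _ _ _)).
Qed.

Lemma fpol_neq0 : fpol != 0.
Proof. by rewrite -size_poly_eq0 size_fpol. Qed.

Lemma fpol_irr : irreducible_poly fpol.
Proof.
apply: cubic_irreducible; first by rewrite size_fpol.
move=> r; rewrite rootE (_ : fpol.[r] = r ^+ 3 + c2 * r ^+ 2 + c1 * r + c0) ?noroot //.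
rewrite /fpol /cf !hornerE /=; ring.
Qed.

Lemma cf_mod a b c : cf a b c %% fpol = cf a b c.
Proof. by rewrite modp_small // size_fpol ltnS size_cf. Qed.

Lemma cf_eq a b c a' b' c' : cf a b c = cf a' b' c' -> [/\ a = a', b = b' & c = c'].
Proof.
move=> E; have h j := congr1 (fun P : {poly K} => P`_j) E.
move: (h 0%N) (h 1%N) (h 2%N); rewrite !coef_cf /= !addr0 !add0r.
by move=> -> -> ->.
Qed.

Lemma cf_small (P : {poly K}) : (size P <= 3)%N -> P = cf P`_0 P`_1 P`_2.
Proof.
move/leq_sizeP => H; apply/polyP => j; rewrite coef_cf.
by case: j => [|[|[|j]]] /=; rewrite ?addr0 ?add0r // H.
Qed.

Lemma mod_small3 (P : {poly K}) : (size (P %% fpol)%R <= 3)%N.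
Proof. by rewrite -ltnS -size_fpol ltn_modp fpol_neq0. Qed.

Lemma inv_mod (g : {poly K}) : g %% fpol != 0 -> exists h, (h * g) %% fpol = 1.
Proof.
move=> g0.
have ndv : ~~ (fpol %| g) by apply: contra g0 => /modp_eq0P ->.
have cop : coprimep fpol g.
  rewrite /coprimep; apply/negPn/negP => sz.
  have := fpol_irr.2 _ sz (dvdp_gcdl fpol g).
  move=> /eqp_dvdl H; move: ndv; rewrite -H dvdp_gcdr //.
case/Bezout_eq1_coprimepP: cop => [[u v]] /= E.
exists v; rewrite -[v * g](addKr (u * fpol)) E.
by rewrite modpD modpN modp_mull oppr0 add0r modp_small // size_poly1 size_fpol.
Qed.

Lemma mod_dom (P Q : {poly K}) : P %% fpol != 0 -> Q %% fpol != 0 -> (P * Q) %% fpol != 0.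
Proof.
move=> P0 Q0; have [h hP] := inv_mod P0; apply: contra Q0 => /eqP PQ.
have -> : Q %% fpol = ((Q * (h * P)) %% fpol) by rewrite -modp_mul hP mulr1.
have -> : Q * (h * P) = h * (P * Q) by ring.
by rewrite -modp_mul PQ mulr0 mod0p.
Qed.


Definition uu := c0 + c2.
Definition e1 : {poly K} := 1.
Definition e2 : {poly K} := 'X.
Definition e3 : {poly K} := cf (-1) uu 1.
Definition T (P : {poly K}) : K := (P %% fpol)`_0 + (P %% fpol)`_2.
Definition L (y : K * K * K) : {poly K} := cf (y.1.1 - y.2) (y.1.2 + uu * y.2) y.2.

Lemma L_e y : L y = y.1.1%:P * e1 + y.1.2%:P * e2 + y.2%:P * e3.
Proof. by rewrite /L /e1 /e2 /e3 /cf polyCB polyCD polyCM polyCN polyC1; ring. Qed.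

Lemma T_add P Q : T (P + Q) = T P + T Q.
Proof. by rewrite /T modpD !coefD; ring. Qed.
Lemma T_C c P : T (c%:P * P) = c * T P.
Proof. by rewrite /T !mul_polyC modpZl !coefZ; ring. Qed.
Lemma T_opp P : T (- P) = - T P.
Proof. by rewrite /T modpN !coefN; ring. Qed.
Lemma T_sub P Q : T (P - Q) = T P - T Q.
Proof. by rewrite T_add T_opp. Qed.
Lemma T_mod P : T (P %% fpol) = T P.
Proof. by rewrite /T modp_id. Qed.
Lemma T_cf a b c : T (cf a b c) = a + c.
Proof. by rewrite /T cf_mod !coef_cf /= !addr0 !add0r. Qed.
Lemma T0 : T 0 = 0.
Proof. by rewrite /T mod0p !coef0 addr0. Qed.
Lemma T_qf Q P : T (Q * fpol + P) = T P.
Proof. by rewrite T_add -[T (Q * fpol)]T_mod modp_mull T0 add0r. Qed.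
Lemma T_mulmod P Q : T (P * (Q %% fpol)) = T (P * Q).
Proof. by rewrite -T_mod modp_mul T_mod. Qed.

Lemma polyC_cf c : c%:P = cf c 0 0.
Proof. by rewrite /cf !polyC0; ring. Qed.

Lemma T11 : T (e1 * e1) = 1.
Proof. by rewrite /e1 mulr1 -polyC1 polyC_cf T_cf addr0. Qed.
Lemma T12 : T (e1 * e2) = 0.
Proof. by rewrite /e1 /e2 mul1r (_ : 'X = cf 0 1 0) ?T_cf ?addr0 // /cf polyC0 polyC1; ring. Qed.
Lemma T13 : T (e1 * e3) = 0.
Proof. by rewrite /e1 mul1r T_cf addrC subrr. Qed.
Lemma T22 : T (e2 * e2) = 1.
Proof. by rewrite /e2 (_ : 'X * 'X = cf 0 0 1) ?T_cf ?add0r // /cf polyC0 polyC1; ring. Qed.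
Lemma T23 : T (e2 * e3) = 0.
Proof.
rewrite /e2 /e3 (_ : 'X * cf (-1) uu 1 = 1 * fpol + cf (- c0) (- (c1 + 1)) (uu - c2)).
  by rewrite T_qf T_cf /uu; ring.
by rewrite /fpol /cf !polyCN polyCB polyCD polyC1; ring.
Qed.

Lemma L_cf a b c : L (a + c, b - uu * c, c) = cf a b c.
Proof. by rewrite /L /=; congr cf; ring. Qed.

Lemma L_mod y : L y %% fpol = L y.
Proof. exact: cf_mod. Qed.

Lemma nondeg g : (forall y, T (g * L y) = 0) -> g %% fpol = 0.
Proof.
move=> H; apply/eqP; apply/negPn/negP => g0.
have [h hg] := inv_mod g0.
have := mod_small3 h; move/cf_small; rewrite -L_cf => E.
have := H ((h %% fpol)`_0 + (h %% fpol)`_2, (h %% fpol)`_1 - uu * (h %% fpol)`_2,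
           (h %% fpol)`_2).
rewrite -E T_mulmod mulrC -T_mod hg.
by rewrite -polyC1 polyC_cf T_cf addr0 => /eqP; rewrite oner_eq0.
Qed.

Lemma T_gL g y : T (g * L y) = y.1.1 * T (g * e1) + y.1.2 * T (g * e2) + y.2 * T (g * e3).
Proof.
rewrite L_e (_ : g * _ = y.1.1%:P * (g * e1) + y.1.2%:P * (g * e2) + y.2%:P * (g * e3)).
  by rewrite !T_add !T_C.
by ring.
Qed.

Lemma nondeg3 g : T (g * e1) = 0 -> T (g * e2) = 0 -> T (g * e3) = 0 -> g %% fpol = 0.
Proof. by move=> h1 h2 h3; apply: nondeg => y; rewrite T_gL h1 h2 h3; ring. Qed.

Lemma e1_mod : e1 %% fpol != 0.
Proof. by rewrite /e1 modp_small ?size_poly1 ?size_fpol // oner_eq0. Qed.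
Lemma e2_mod : e2 %% fpol != 0.
Proof.
rewrite (_ : e2 = cf 0 1 0) ?cf_mod; last by rewrite /e2 /cf polyC0 polyC1; ring.
by apply/eqP => /(congr1 (fun P : {poly K} => P`_1)); rewrite coef_cf coef0 /= add0r addr0 => /eqP; rewrite oner_eq0.
Qed.
Lemma e3_mod : e3 %% fpol != 0.
Proof.
rewrite /e3 cf_mod.
by apply/eqP => /(congr1 (fun P : {poly K} => P`_2)); rewrite coef_cf coef0 /= !add0r => /eqP; rewrite oner_eq0.
Qed.

Lemma T33 : T (e3 * e3) != 0.
Proof.
apply/negP => /eqP h; case/negP: e3_mod; apply/eqP; apply: nondeg3.
- by rewrite mulrC T13.
- by rewrite mulrC T23.
- by [].
Qed.


Lemma cf_sub a b c a' b' c' : cf a b c - cf a' b' c' = cf (a - a') (b - b') (c - c').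
Proof. by rewrite /cf !polyCB; ring. Qed.

Lemma cf0 : cf 0 0 0 = 0.
Proof. by rewrite /cf polyC0; ring. Qed.

Lemma row_gen (A e f1 f2 : {poly K}) :
  e %% fpol != 0 -> T (e * e) != 0 ->
  (forall g, T (g * e) = 0 -> T (g * f1) = 0 -> T (g * f2) = 0 -> g %% fpol = 0) ->
  T (e * f1) = 0 -> T (e * f2) = 0 -> T (A * e * f1) = 0 -> T (A * e * f2) = 0 ->
  exists lam, (A - lam%:P) %% fpol = 0.
Proof.
move=> e0 t0 span o1 o2 h1 h2.
set lam := T (A * e * e) / T (e * e); exists lam.
have gen f : (A - lam%:P) * e * f = A * e * f - lam%:P * (e * f) by ring.
have g0 : ((A - lam%:P) * e) %% fpol = 0.
  apply: span; rewrite gen T_sub T_C.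
  - by rewrite /lam mulfVK // subrr.
  - by rewrite h1 o1 mulr0 subr0.
  - by rewrite h2 o2 mulr0 subr0.
apply/eqP; apply: contraT => ne; case/negP: (mod_dom ne e0); by rewrite g0.
Qed.

Lemma const_of a lam : (L a - lam%:P) %% fpol = 0 -> a.1.2 = 0 /\ a.2 = 0.
Proof.
rewrite polyC_cf /L cf_sub cf_mod -cf0 => /cf_eq [_ h2 h3].
move: h3; rewrite subr0 => h3; move: h2; rewrite h3 mulr0 !subr0 addr0 => h2.
by split.
Qed.

Lemma row1 a : T (L a * e1 * e2) = 0 -> T (L a * e1 * e3) = 0 -> a.1.2 = 0 /\ a.2 = 0.
Proof.
move=> h1 h2.
have t0 : T (e1 * e1) != 0 by rewrite T11 oner_eq0.
have sp g : T (g * e1) = 0 -> T (g * e2) = 0 -> T (g * e3) = 0 -> g %% fpol = 0.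
  exact: nondeg3.
have [lam] := row_gen e1_mod t0 sp T12 T13 h1 h2.
exact: const_of.
Qed.

Lemma row2 a : T (L a * e2 * e1) = 0 -> T (L a * e2 * e3) = 0 -> a.1.2 = 0 /\ a.2 = 0.
Proof.
move=> h1 h2.
have t0 : T (e2 * e2) != 0 by rewrite T22 oner_eq0.
have sp g : T (g * e2) = 0 -> T (g * e1) = 0 -> T (g * e3) = 0 -> g %% fpol = 0.
  by move=> g2 g1 g3; apply: nondeg3.
have o1 : T (e2 * e1) = 0 by rewrite mulrC T12.
have [lam] := row_gen e2_mod t0 sp o1 T23 h1 h2.
exact: const_of.
Qed.

Lemma row3 a : T (L a * e3 * e1) = 0 -> T (L a * e3 * e2) = 0 -> a.1.2 = 0 /\ a.2 = 0.
Proof.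
move=> h1 h2.
have sp g : T (g * e3) = 0 -> T (g * e1) = 0 -> T (g * e2) = 0 -> g %% fpol = 0.
  by move=> g3 g1 g2; apply: nondeg3.
have o1 : T (e3 * e1) = 0 by rewrite mulrC T13.
have o2 : T (e3 * e2) = 0 by rewrite mulrC T23.
have [lam] := row_gen e3_mod T33 sp o1 o2 h1 h2.
exact: const_of.
Qed.



Variable chi : K -> Cplx.
Hypothesis chiD : forall a b, chi (a + b) = chi a * chi b.
Hypothesis chiC : forall a, (chi a)^* * chi a = 1.
Hypothesis chi1 : forall a, chi a = 1 -> a = 0.
Hypothesis two : (2%:R : K) != 0.

Lemma chi_neq0 a : chi a != 0.
Proof. by apply/negP => /eqP h; move: (chiC a); rewrite h mulr0 => /eqP; rewrite eq_sym oner_eq0. Qed.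

Lemma chi0 : chi 0 = 1.
Proof.
apply: (mulfI (chi_neq0 0)); by rewrite -chiD addr0 mulr1.
Qed.

Lemma chiN a : chi (- a) = (chi a)^*.
Proof.
apply: (mulIf (chi_neq0 a)); by rewrite -chiD addNr chi0 chiC.
Qed.

Definition ch (P : {poly K}) := chi (T P).

Lemma chD P Q : ch (P + Q) = ch P * ch Q.
Proof. by rewrite /ch T_add chiD. Qed.

Lemma conj_ch P Q : (ch P)^* * ch Q = ch (Q - P).
Proof. by rewrite /ch T_sub chiD chiN mulrC. Qed.

Definition NN := (#|K| ^ 3)%N.

Definition addy (y z : K * K * K) : K * K * K :=
  (y.1.1 + z.1.1, y.1.2 + z.1.2, y.2 + z.2).

Lemma addy_inj z : injective (addy ^~ z).
Proof.
move=> [[y1 y2] y3] [[w1 w2] w3] /= [/addIr -> /addIr -> /addIr ->] //.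
Qed.

Lemma cf_add a b c a' b' c' : cf a b c + cf a' b' c' = cf (a + a') (b + b') (c + c').
Proof. by rewrite /cf !polyCD; ring. Qed.

Lemma L_add y z : L (addy y z) = L y + L z.
Proof. by rewrite /L cf_add /=; congr cf; ring. Qed.

Lemma L0 : L (0, 0, 0) = 0.
Proof. by rewrite /L /= subr0 mulr0 addr0 cf0. Qed.

Lemma card3 : #|{: K * K * K}| = NN.
Proof. by rewrite !card_prod /NN; ring. Qed.

Lemma csum g : \sum_(y : K * K * K) ch (g * L y) =
  if g %% fpol == 0 then NN%:R else 0.
Proof.
case: eqP => g0.
  rewrite (eq_bigr (fun _ => 1)) ?sumr_const ?card3 //.
  move=> y _; rewrite /ch -T_mod mulrC -modp_mul g0 mulr0 mod0p T0 chi0 //.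
have [y0 hy0] : exists y0, T (g * L y0) != 0.
  apply/existsP; apply: contraT; rewrite negb_exists => /forallP H.
  by case: g0; apply: nondeg => y; move: (H y); rewrite negbK => /eqP.
set S := \sum_(y : K * K * K) _.
have : S = chi (T (g * L y0)) * S.
  rewrite {1}/S (reindex_inj (@addy_inj y0)) /S mulr_sumr; apply: eq_bigr => y _.
  by rewrite L_add mulrDr chD mulrC.
move/eqP; rewrite -{1}[S]mul1r -subr_eq0 -mulrBl mulf_eq0 => /orP[|/eqP //].
by rewrite subr_eq0 => /eqP/esym/chi1/eqP; rewrite (negPf hy0).
Qed.

Definition Phi (a b y : K * K * K) : {poly K} := L a * L y ^+ 2 + L b * L y.
Definition vq (a b y : K * K * K) : Cplx := cst NN * ch (Phi a b y).
Definition hdotK (v w : K * K * K -> Cplx) := \sum_(y : K * K * K) (v y)^* * w y.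

Lemma hdotK_vq a b a' b' : hdotK (vq a b) (vq a' b') =
  cst NN * cst NN * \sum_y ch ((L a' - L a) * L y ^+ 2 + (L b' - L b) * L y).
Proof.
rewrite /hdotK mulr_sumr; apply: eq_bigr => y _.
rewrite /vq rmorphM /= cst_conj mulrACA conj_ch /Phi; congr (_ * ch _); ring.
Qed.

Lemma L_inj : injective L.
Proof.
move=> [[y1 y2] y3] [[w1 w2] w3]; rewrite /L /= => /cf_eq [h1 h2 h3].
move: h2 h1; rewrite h3 => /addIr -> /subIr -> //.
Qed.

Lemma NN_neq0 : (NN%:R : Cplx) != 0.
Proof. by rewrite pnatr_eq0 /NN expn_eq0 negb_and -lt0n; apply/orP; left; apply/card_gt0P; exists 0. Qed.

Lemma vq_on a b b' : hdotK (vq a b) (vq a b') = (b == b')%:R.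
Proof.
rewrite hdotK_vq subrr.
rewrite (eq_bigr (fun y => ch ((L b' - L b) * L y))); last by move=> y _; rewrite mul0r add0r.
have E : (L b' - L b) %% fpol = L b' - L b by rewrite /L cf_sub cf_mod.
rewrite csum E subr_eq0 (inj_eq L_inj) eq_sym.
case: eqP => _; last by rewrite mulr0.
by rewrite cst_sq mulVf // NN_neq0.
Qed.

Lemma Ly_mod0 y : (L y %% fpol == 0) = (y == (0, 0, 0)).
Proof.
rewrite L_mod; apply/eqP/eqP => [|->]; last by rewrite L0.
by rewrite -L0; apply: L_inj.
Qed.

Lemma gauss D C : D %% fpol != 0 ->
  `|\sum_y ch (D * L y ^+ 2 + C * L y)| ^+ 2 = NN%:R.
Proof.
move=> D0; rewrite normCKC rmorph_sum /= mulr_suml.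
set Ph := fun y => D * L y ^+ 2 + C * L y.
transitivity (\sum_z \sum_y ch (Ph y) * ch ((2%:R *: D * L y) * L z)).
  apply: eq_bigr => z _; rewrite mulr_sumr (reindex_inj (@addy_inj z)).
  apply: eq_bigr => y _; rewrite conj_ch -chD /Ph L_add; congr ch.
  by rewrite -mul_polyC; ring.
rewrite exchange_big /=.
transitivity (\sum_y ch (Ph y) * (if (2%:R *: D * L y) %% fpol == 0 then NN%:R else 0)).
  by apply: eq_bigr => y _; rewrite -mulr_sumr csum.
rewrite (bigD1 (0, 0, 0)) //= big1 /=.
  by rewrite addr0 /Ph L0 expr0n /= !mulr0 addr0 mod0p eqxx /ch T0 chi0 mul1r.
move=> y /= y0; rewrite ifF ?mulr0 //; apply/negbTE.
rewrite -scalerAl modpZl scaler_eq0 negb_or two /=.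
by apply: mod_dom => //; rewrite Ly_mod0.
Qed.

Lemma cstNN_neq0 : cst NN != 0.
Proof. by rewrite /cst invr_eq0 sqrtC_eq0 NN_neq0. Qed.

Lemma vq_mu a b a' b' : a != a' ->
  `|hdotK (vq a b) (vq a' b')| ^+ 2 = NN%:R^-1.
Proof.
move=> ne; rewrite hdotK_vq normrM exprMn gauss.
  rewrite normrM !cst_norm exprMn !expr2 cst_sq; field; exact: NN_neq0.
have E : (L a' - L a) %% fpol = L a' - L a by rewrite /L cf_sub cf_mod.
by rewrite E subr_eq0 (inj_eq L_inj) eq_sym.
Qed.

Lemma ch_norm P : `|ch P| ^+ 2 = 1.
Proof. by rewrite normCKC chiC. Qed.

Lemma vq_norm a b y : `|vq a b y| ^+ 2 = NN%:R^-1.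
Proof. by rewrite /vq normrM exprMn ch_norm mulr1 cst_norm expr2 cst_sq. Qed.

Lemma L_k0 k : L (k, 0, 0) = k%:P.
Proof. by rewrite /L /= subr0 mulr0 addr0 polyC_cf. Qed.

Lemma polyC2 : ((2%:R : K)%:P) = 2%:R.
Proof. by rewrite polyCMn polyC1. Qed.

Lemma vq_sep k b : exists U V W : K -> Cplx,
  forall y1 y2 y3, vq (k, 0, 0) b (y1, y2, y3) = U y1 * V y2 * W y3.
Proof.
pose X (t s : K) := k * t * t * s.
exists (fun y1 => cst NN * chi (k * y1 * y1 * T (e1 * e1) + y1 * T (L b * e1))),
       (fun y2 => chi (k * y2 * y2 * T (e2 * e2) + y2 * T (L b * e2))),
       (fun y3 => chi (k * y3 * y3 * T (e3 * e3) + y3 * T (L b * e3))).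
move=> y1 y2 y3; rewrite /vq /ch /Phi L_k0 L_e /= -!mulrA -!chiD; congr (_ * chi _).
have -> : k%:P * (y1%:P * e1 + y2%:P * e2 + y3%:P * e3) ^+ 2
   + L b * (y1%:P * e1 + y2%:P * e2 + y3%:P * e3) =
   k%:P * (y1%:P * (y1%:P * (e1 * e1))) + k%:P * (y2%:P * (y2%:P * (e2 * e2)))
   + k%:P * (y3%:P * (y3%:P * (e3 * e3)))
   + (2%:R : K)%:P * (k%:P * (y1%:P * (y2%:P * (e1 * e2))))
   + (2%:R : K)%:P * (k%:P * (y1%:P * (y3%:P * (e1 * e3))))
   + (2%:R : K)%:P * (k%:P * (y2%:P * (y3%:P * (e2 * e3))))
   + y1%:P * (L b * e1) + y2%:P * (L b * e2) + y3%:P * (L b * e3).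
  by rewrite polyC2; ring.
have t2 : T e2 = 0 by rewrite -T12 /e1 mul1r.
have t3 : T e3 = 0 by rewrite -T13 /e1 mul1r.
rewrite !T_add !T_C t2 t3 T23; ring.
Qed.

Lemma vq_rank a b x x' x'' x''' :
  vq a b x * vq a b x' = vq a b x'' * vq a b x''' ->
  T (Phi a b x + Phi a b x' - (Phi a b x'' + Phi a b x''')) = 0.
Proof.
rewrite /vq mulrACA [X in _ = X]mulrACA -!chD => /(mulfI (mulf_neq0 cstNN_neq0 cstNN_neq0)) E.
apply: chi1; rewrite -/(ch _) -conj_ch E chiC //.
Qed.

Lemma phi4 a b x x' x'' x''' U V :
  L x = U + V -> L x' = 0 -> L x'' = U -> L x''' = V ->
  Phi a b x + Phi a b x' - (Phi a b x'' + Phi a b x''') = (2%:R : K)%:P * (L a * U * V).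
Proof. by rewrite /Phi => -> -> -> ->; rewrite polyC2; ring. Qed.

Lemma Lpt (y1 y2 y3 : K) : L (y1, y2, y3) = y1%:P * e1 + y2%:P * e2 + y3%:P * e3.
Proof. exact: L_e. Qed.

Lemma T2 P : T ((2%:R : K)%:P * P) = 0 -> T P = 0.
Proof. by rewrite T_C => /eqP; rewrite mulf_eq0 (negPf two) => /eqP. Qed.

Definition nonconst (a : K * K * K) := ~~ ((a.1.2 == 0) && (a.2 == 0)).

Lemma vq_ent1 a b : nonconst a ->
  ~ (forall z1 z2, vq a b (1, z1, z2) * vq a b (0, 0, 0) = vq a b (1, 0, 0) * vq a b (0, z1, z2)).
Proof.
move=> na H; case/negP: na; apply/andP.
have : a.1.2 = 0 /\ a.2 = 0.
  apply: row1; apply: T2.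
  - rewrite -(@phi4 a b (1,1,0) (0,0,0) (1,0,0) (0,1,0)) ?vq_rank // !Lpt ?polyC0 ?polyC1; ring.
  - rewrite -(@phi4 a b (1,0,1) (0,0,0) (1,0,0) (0,0,1)) ?vq_rank // !Lpt ?polyC0 ?polyC1; ring.
by case=> -> ->.
Qed.

Lemma vq_ent2 a b : nonconst a ->
  ~ (forall z1 z2, vq a b (z1, 1, z2) * vq a b (0, 0, 0) = vq a b (0, 1, 0) * vq a b (z1, 0, z2)).
Proof.
move=> na H; case/negP: na; apply/andP.
have : a.1.2 = 0 /\ a.2 = 0.
  apply: row2; apply: T2.
  - rewrite -(@phi4 a b (1,1,0) (0,0,0) (0,1,0) (1,0,0)) ?vq_rank // !Lpt ?polyC0 ?polyC1; ring.
  - rewrite -(@phi4 a b (0,1,1) (0,0,0) (0,1,0) (0,0,1)) ?vq_rank // !Lpt ?polyC0 ?polyC1; ring.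
by case=> -> ->.
Qed.

Lemma vq_ent3 a b : nonconst a ->
  ~ (forall z1 z2, vq a b (z1, z2, 1) * vq a b (0, 0, 0) = vq a b (0, 0, 1) * vq a b (z1, z2, 0)).
Proof.
move=> na H; case/negP: na; apply/andP.
have : a.1.2 = 0 /\ a.2 = 0.
  apply: row3; apply: T2.
  - rewrite -(@phi4 a b (1,0,1) (0,0,0) (0,0,1) (1,0,0)) ?vq_rank // !Lpt ?polyC0 ?polyC1; ring.
  - rewrite -(@phi4 a b (0,1,1) (0,0,0) (0,0,1) (0,1,0)) ?vq_rank // !Lpt ?polyC0 ?polyC1; ring.
by case=> -> ->.
Qed.

End CubicField.

Section OddPrime.
Variable p : nat.
Hypothesis hp : prime p.
Hypothesis p2 : p != 2%N.

Local Notation K := 'F_p.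

Lemma ltK (k : K) : (val k < p)%N.
Proof. by rewrite -[X in (_ < X)%N](Fp_cast hp) ltn_ord. Qed.

Definition ordK (k : K) : 'I_p := Ordinal (ltK k).

Lemma ordKK (k : K) : ((ordK k : nat)%:R : K) = k.
Proof. by apply: val_inj; rewrite /= val_Fp_nat // modn_small // ltK. Qed.

Lemma natK (i : 'I_p) : ordK ((i : nat)%:R) = i.
Proof. by apply: val_inj; rewrite /= val_Fp_nat // modn_small. Qed.

Definition toK (x : idx3 p) : K * K * K :=
  (((x.1.1 : nat)%:R : K), ((x.1.2 : nat)%:R : K), ((x.2 : nat)%:R : K)).
Definition fromK (y : K * K * K) : idx3 p := (ordK y.1.1, ordK y.1.2, ordK y.2).

Lemma toKK : cancel fromK toK.
Proof. by move=> [[a b] c]; rewrite /toK /fromK /= !ordKK. Qed.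
Lemma fromKK : cancel toK fromK.
Proof. by move=> [[a b] c]; rewrite /toK /fromK /= !natK. Qed.

Lemma hdot_toK (v w : K * K * K -> Cplx) :
  hdot (fun x => v (toK x)) (fun x => w (toK x)) = hdotK v w.
Proof.
rewrite /hdotK (reindex toK) //; exists fromK => y _; [exact: fromKK|exact: toKK].
Qed.

Lemma two_p : (2%:R : K) != 0.
Proof.
apply/eqP => /(congr1 (fun k : K => nat_of_ord k)); rewrite val_Fp_nat // modn_small //.
by rewrite ltn_neqAle eq_sym p2 prime_gt1.
Qed.

Lemma cubic_exists : exists c0 c1 c2 : K,
  forall r : K, r ^+ 3 + c2 * r ^+ 2 + c1 * r + c0 != 0.
Proof.
pose g (y : K * K * K) : K * K * K := (y.1.2 - y.1.1, y.2 - y.1.1 * y.1.2, - (y.1.1 * y.2)).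
have [y ny] : exists y, y \notin codom g.
  apply/existsP; apply: contraT; rewrite negb_exists => /forallP H.
  have : #|codom g| = #|{: K * K * K}|.
    by apply: eq_card => y; move: (H y); rewrite negbK => ->.
  move/eqP/image_injP => inj.
  have := inj (0, -1, 0) (1, 0, 0) isT isT.
  have E : g (0, -1, 0) = g (1, 0, 0) by rewrite /g /=; congr (_, _, _); ring.
  by case/(_ E) => /esym/eqP; rewrite oner_eq0.
exists y.2, y.1.2, y.1.1 => r; apply: contra ny => /eqP E.
apply/codomP; exists (r, y.1.1 + r, y.1.2 + r * (y.1.1 + r)).
rewrite /g /=; case: y E => [[a b] c] /= E; congr (_, _, _); try ring.
by rewrite (_ : c = - (r ^+ 3 + a * r ^+ 2 + b * r)); [ring | apply/eqP; rewrite -addr_eq0 addrC E].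
Qed.

End OddPrime.

Section OddMain.
Variable p : nat.
Hypothesis hp : prime p.
Hypothesis p2 : p != 2%N.
Variable w : Cplx.
Hypothesis pw : p.-primitive_root w.

Local Notation K := 'F_p.

Definition chiw (k : K) : Cplx := w ^+ (val k).

Lemma chiwD a b : chiw (a + b) = chiw a * chiw b.
Proof.
rewrite /chiw -exprD.
have -> : val (a + b) = ((val a + val b) %% p)%N by rewrite /=; congr (_ %% _)%N; exact: Fp_cast.
by rewrite (prim_expr_mod pw).
Qed.

Lemma chiwC a : (chiw a)^* * chiw a = 1.
Proof. by rewrite /chiw rmorphXn /= -exprMn (prim_conj pw) expr1n. Qed.

Lemma chiw1 a : chiw a = 1 -> a = 0.
Proof.
move=> /eqP; rewrite /chiw -(prim_order_dvd pw) => dv.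
have lt := ltK hp a.
have h : (val a = 0)%N.
  move: dv lt; case: (val a) => [//|n] dv lt.
  by move: (dvdn_leq (ltn0Sn n) dv); rewrite leqNgt lt.
by apply: val_inj; rewrite h.
Qed.

Lemma cardK3 : #|{: K * K * K}| = (p ^ 3)%N.
Proof. by rewrite !card_prod card_Fp // (expnS p 2) (expnS p 1) expn1 mulnA mulnC. Qed.

Definition enc (y : K * K * K) : 'I_(p ^ 3) := cast_ord cardK3 (enum_rank y).
Definition dec (m : 'I_(p ^ 3)) : K * K * K := enum_val (cast_ord (esym cardK3) m).

Lemma encK : cancel enc dec.
Proof. by move=> y; rewrite /enc /dec cast_ordK enum_rankK. Qed.
Lemma decK : cancel dec enc.
Proof. by move=> m; rewrite /enc /dec enum_valK cast_ordKV. Qed.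

Lemma NN_p : NN K = (p ^ 3)%N.
Proof. by rewrite /NN card_Fp. Qed.

Lemma mainOdd :
  exists M : 'I_(p ^ 3).+1 -> family3 p,
    (forall n, orthonormal_basis (M n)) /\
    (forall n m, n != m -> mutually_unbiased (M n) (M m)) /\
    exists S : {set 'I_(p ^ 3).+1},
      #|S| = p.+1 /\
      (forall n, n \in S -> forall a, fully_separable (M n a)) /\
      (forall n, n \notin S -> forall a, genuinely_tripartite_entangled (M n a)).
Proof.
have [c0 [c1 [c2 nr]]] := cubic_exists p.
pose V (m : 'I_(p ^ 3)) (a : idx3 p) := vq c0 c1 c2 chiw (dec m) (toK a).
pose Q (m : 'I_(p ^ 3)) : family3 p := fun a x => V m a (toK x).
pose S' := [set enc (k, 0, 0) | k : K].
have two := two_p hp p2.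
have o0 : (0 < p)%N by apply: prime_gt0.
have o1 : (1 < p)%N by apply: prime_gt1.
apply: (@assemble p Q S').
- move=> m a b; rewrite (hdot_toK hp (V m a) (V m b)) /V.
  by rewrite (vq_on nr chiwD chiwC chiw1) (inj_eq (can_inj (fromKK hp))).
- move=> m m' ne a b; rewrite (hdot_toK hp (V m a) (V m' b)) /V.
  rewrite (vq_mu nr chiwD chiwC chiw1 two) ?NN_p //.
  by apply: contra ne => /eqP E; rewrite -(decK m) E decK.
- by move=> m a x; rewrite /Q /V (vq_norm c0 c1 c2 chiwC) NN_p.
- rewrite card_imset ?card_Fp //.
  by move=> k k' /(can_inj encK) [].
- move=> m /imsetP [k _ ->] a.
  have [U [V' [W H]]] := vq_sep c0 c1 c2 chiwD k (toK a).
  exists (fun i => U (i%:R)), (fun j => V' (j%:R)), (fun l => W (l%:R)).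
  by move=> i j l; rewrite /Q /V encK; apply: H.
- move=> m mS a.
  have nc : nonconst (dec m).
    apply/negP => /andP [/eqP h1 /eqP h2]; case/negP: mS; apply/imsetP.
    exists (dec m).1.1 => //; rewrite -{1}(decK m); congr enc.
    by move: h1 h2; case: (dec m) => [[x y] z] /= -> ->.
  pose i0 : 'I_p := Ordinal o0.
  pose i1 : 'I_p := Ordinal o1.
  split; [|split].
  + move/prod1_rank => H.
    apply: (vq_ent1 nr chiwD chiwC chiw1 two (b := toK a) nc) => z1 z2.
    have := H i1 i0 (ordK hp z1) (ordK hp z2) i0 i0.
    by rewrite /Q /V /toK /= !ordKK.
  + move/prod2_rank => H.
    apply: (vq_ent2 nr chiwD chiwC chiw1 two (b := toK a) nc) => z1 z2.
    have := H (ordK hp z1) i0 i1 (ordK hp z2) i0 i0.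
    by rewrite /Q /V /toK /= !ordKK.
  + move/prod3_rank => H.
    apply: (vq_ent3 nr chiwD chiwC chiw1 two (b := toK a) nc) => z1 z2.
    have := H (ordK hp z1) i0 (ordK hp z2) i1 i0 i0.
    by rewrite /Q /V /toK /= !ordKK.
Qed.

End OddMain.

Theorem mainTheorem5 (p : nat) (hp : prime p) :
  exists M : 'I_(p ^ 3).+1 -> family3 p,
    (forall n, orthonormal_basis (M n)) /\
    (forall n m, n != m -> mutually_unbiased (M n) (M m)) /\
    exists S : {set 'I_(p ^ 3).+1},
      #|S| = p.+1 /\
      (forall n, n \in S -> forall a, fully_separable (M n a)) /\
      (forall n, n \notin S -> forall a, genuinely_tripartite_entangled (M n a)).
Proof.
have [->|p2] := eqVneq p 2%N; first exact: main2.
have [w pw] := Cplx_prim_root_exists (prime_gt0 hp).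
move: (mainOdd hp p2 pw) => H; exact H.
Qed.
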